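(* Let $L_{k-1}>0$, $L_k>0$, $\mu_f>0$, $\tau_{k-1},\tau_k\in(0,1)$, and set $m_k:=\frac{L_k+\mu_f}{L_{k-1}+\mu_f}$, $a_k:=\frac{L_k}{L_{k-1}+\mu_f}$. Assume $$(1-\tau_k)\big[\tau_{k-1}^2+m_k\tau_k\big]\ge a_k\tau_k\qquad\text{and}\qquad m_k\tau_k\tau_{k-1}^2+m_k^2\tau_k^2\ge a_k\tau_{k-1}^2.$$ Then the interval $$\max\Big\{\frac{\tau_{k-1}+\sqrt{\tau_{k-1}^2+4a_k}}{2(1-\tau_{k-1})},\ \frac{a_k\tau_k}{(1-\tau_k)(1-\tau_{k-1})\tau_{k-1}}\Big\}\le\omega_k\le\frac{\tau_{k-1}^2+m_k\tau_k}{\tau_{k-1}(1-\tau_{k-1})}$$ is nonempty, and for any $\omega_k$ in it, any $x^{k-1},x^k,x\in\mathbb{R}^p$, and $\hat x^k:=x^k+\frac{1}{\omega_k}(x^k-x^{k-1})$, $$L_k\tau_k^2\big\|\tfrac1{\tau_k}[\hat x^k-(1-\tau_k)x^k]-x\big\|^2-\mu_f\tau_k(1-\tau_k)\|x^k-x\|^2\le(1-\tau_k)(L_{k-1}+\mu_f)\tau_{k-1}^2\big\|\tfrac1{\tau_{k-1}}[x^k-(1-\tau_{k-1})x^{k-1}]-x\big\|^2.$$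
   Context: Norms are Euclidean on $\mathbb{R}^p$. *)

(* Defs.v *)
From mathcomp Require Import all_boot all_order all_algebra.
Set Implicit Arguments. Unset Strict Implicit. Unset Printing Implicit Defensive.
Import Order.TTheory GRing.Theory Num.Theory.
Local Open Scope ring_scope.

Definition enorm (R : rcfType) (p : nat) (v : 'rV[R]_p) : R :=
  Num.sqrt (\sum_(i < p) v ord0 i ^+ 2).

(* Main.v *)
Require Import Defs.
From mathcomp Require Import all_boot all_order all_algebra.
From mathcomp Require Import ring lra.
Import Order.TTheory GRing.Theory Num.Theory.
Local Open Scope ring_scope.

Lemma key_f (R : realFieldType) (a c s t y : R) :
  0 < c -> 0 < s -> s < 1 ->
  0 <= y ^+ 2 - t * y - a -> 0 <= (1 - s) * t * y - a * s ->
  0 <= t ^+ 2 + (a + c) * s - t * y ->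
  0 <= c * s * ((1 - s) * y ^+ 2 - a) - a * (s * y - t) ^+ 2.
Proof.
move=> hc hs hs1 g1 g2 g3.
have -> : c * s * ((1 - s) * y ^+ 2 - a) - a * (s * y - t) ^+ 2 =
  (t ^+ 2 + (a + c) * s - t * y) * ((1 - s) * (y ^+ 2 - t * y - a) + ((1 - s) * t * y - a * s))
  + (y ^+ 2 - t * y - a) * ((1 - s) * t * y - a * s) by ring.
apply: addr_ge0; apply: mulr_ge0 => //.
apply: addr_ge0 => //; apply: mulr_ge0 => //; lra.
Qed.

Lemma key_G (R : realFieldType) (a c s t y u z : R) :
  0 < a -> 0 < c -> 0 < s -> s < 1 -> 0 < y ->
  0 <= c * s * ((1 - s) * y ^+ 2 - a) - a * (s * y - t) ^+ 2 ->
  a * ((s * y - t) * u + z) ^+ 2 <= (1 - s) * y ^+ 2 * z ^+ 2 + c * s * (1 - s) * y ^+ 2 * u ^+ 2.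
Proof.
move=> ha hc hs hs1 hy hf.
set N := s * y - t.
set X := c * s * (1 - s) * y ^+ 2.
set Y := (1 - s) * y ^+ 2.
have hX : 0 < X by rewrite /X; apply: mulr_gt0; [apply: mulr_gt0; [nra|lra]| nra].
have hY : 0 <= Y by rewrite /Y; apply: mulr_ge0; [lra|nra].
have hk : 0 < N ^+ 2 * Y + X by have := sqr_ge0 N; nra.
rewrite -subr_ge0.
have E : (N ^+ 2 * Y + X) * (Y * z ^+ 2 + X * u ^+ 2 - a * (N * u + z) ^+ 2) =
  Y * (c * s * ((1 - s) * y ^+ 2 - a) - a * N ^+ 2) * (N * u + z) ^+ 2
  + (N * Y * z - X * u) ^+ 2 by rewrite /X /Y; ring.
have : 0 <= (N ^+ 2 * Y + X) * (Y * z ^+ 2 + X * u ^+ 2 - a * (N * u + z) ^+ 2).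
  rewrite E; apply: addr_ge0; last exact: sqr_ge0.
  by apply: mulr_ge0; [apply: mulr_ge0|exact: sqr_ge0].
by rewrite pmulr_rge0.
Qed.

Lemma coord (R : rcfType) (Lkm1 Lk muf t s w xm xk x : R) :
  0 < Lkm1 -> 0 < Lk -> 0 < muf -> 0 < t -> t < 1 -> 0 < s -> s < 1 ->
  0 < (1 - t) * w ->
  0 <= muf / (Lkm1 + muf) * s * ((1 - s) * ((1 - t) * w) ^+ 2 - Lk / (Lkm1 + muf))
       - Lk / (Lkm1 + muf) * (s * ((1 - t) * w) - t) ^+ 2 ->
  Lk * s ^+ 2 * (s^-1 * (xk + w^-1 * (xk - xm) - (1 - s) * xk) - x) ^+ 2
   - muf * s * (1 - s) * (xk - x) ^+ 2
  <= (1 - s) * (Lkm1 + muf) * t ^+ 2 * (t^-1 * (xk - (1 - t) * xm) - x) ^+ 2.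
Proof.
move=> h1 h2 h3 ht ht1 hs hs1 hy hf.
set d := Lkm1 + muf.
have hd : 0 < d by rewrite /d; lra.
set y := (1 - t) * w.
have hw : w != 0 by apply/eqP => w0; move: hy; rewrite /y w0 mulr0 ltxx.
have hq : 1 - t != 0 by apply/eqP => q0; move: ht1; lra.
have hsn : s != 0 by apply/eqP => s0; move: hs; rewrite s0 ltxx.
have htn : t != 0 by apply/eqP => s0; move: ht; rewrite s0 ltxx.
have hdn : d != 0 by rewrite gt_eqF.
have hyn : y != 0 by apply/eqP => y0; move: hy; rewrite -/y y0 ltxx.
set u := xk - x.
set z := (xk - x) - (1 - t) * (xm - x).
have K := @key_G R (Lk / d) (muf / d) s t y u z (divr_gt0 h2 hd) (divr_gt0 h3 hd) hs hs1 hy hf.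
have e1 : s^-1 * (xk + w^-1 * (xk - xm) - (1 - s) * xk) - x = ((s * y - t) * u + z) / (s * y).
  rewrite /y /u /z; field; by rewrite ?hw ?hq ?hsn ?htn ?hyn ?hdn.
have e2 : t^-1 * (xk - (1 - t) * xm) - x = z / t by rewrite /z; field.
rewrite e1 e2 lerBlDr.
have e3 : Lk * s ^+ 2 * (((s * y - t) * u + z) / (s * y)) ^+ 2 =
   d / y ^+ 2 * (Lk / d * ((s * y - t) * u + z) ^+ 2).
  field; by rewrite ?hw ?hq ?hsn ?htn ?hyn ?hdn.
have e4 : (1 - s) * d * t ^+ 2 * (z / t) ^+ 2 + muf * s * (1 - s) * u ^+ 2 =
   d / y ^+ 2 * ((1 - s) * y ^+ 2 * z ^+ 2 + muf / d * s * (1 - s) * y ^+ 2 * u ^+ 2).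
  field; by rewrite ?hw ?hq ?hsn ?htn ?hyn ?hdn.
rewrite e3 e4; apply: ler_wpM2l => //.
apply: divr_ge0; [lra | exact: sqr_ge0].
Qed.

Theorem lemma7 (R : rcfType) (Lkm1 Lk muf tkm1 tk : R) :
  0 < Lkm1 -> 0 < Lk -> 0 < muf ->
  0 < tkm1 < 1 -> 0 < tk < 1 ->
  let mk := (Lk + muf) / (Lkm1 + muf) in
  let ak := Lk / (Lkm1 + muf) in
  (1 - tk) * (tkm1 ^+ 2 + mk * tk) >= ak * tk ->
  mk * tk * tkm1 ^+ 2 + mk ^+ 2 * tk ^+ 2 >= ak * tkm1 ^+ 2 ->
  let lo := Num.max ((tkm1 + Num.sqrt (tkm1 ^+ 2 + 4 * ak)) / (2 * (1 - tkm1)))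
                    (ak * tk / ((1 - tk) * (1 - tkm1) * tkm1)) in
  let hi := (tkm1 ^+ 2 + mk * tk) / (tkm1 * (1 - tkm1)) in
  (exists wk : R, lo <= wk <= hi) /\
  (forall wk : R, lo <= wk <= hi ->
   forall (p : nat) (xkm1 xk x : 'rV[R]_p),
   let xhat := xk + wk^-1 *: (xk - xkm1) in
   Lk * tk ^+ 2 * enorm (tk^-1 *: (xhat - (1 - tk) *: xk) - x) ^+ 2
     - muf * tk * (1 - tk) * enorm (xk - x) ^+ 2
   <= (1 - tk) * (Lkm1 + muf) * tkm1 ^+ 2
        * enorm (tkm1^-1 *: (xk - (1 - tkm1) *: xkm1) - x) ^+ 2).
Proof.
move=> h1 h2 h3 /andP[ht ht1] /andP[hs hs1] mk ak H1 H2 lo hi.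
set t := tkm1 in ht ht1 H1 H2 lo hi *.
set s := tk in hs hs1 H1 H2 lo hi *.
set S := Num.sqrt (t ^+ 2 + 4 * ak).
have hd : 0 < Lkm1 + muf by lra.
have ha : 0 < ak by apply: divr_gt0.
have hm : 0 < mk by apply: divr_gt0 => //; lra.
have hc : 0 < muf / (Lkm1 + muf) by apply: divr_gt0.
have emk : mk = ak + muf / (Lkm1 + muf).
  by rewrite /mk /ak; field; rewrite gt_eqF.
have hS0 : 0 <= S := sqrtr_ge0 _.
have hS2 : S ^+ 2 = t ^+ 2 + 4 * ak by rewrite sqr_sqrtr //; nra.
have hq : 0 < 1 - t by lra.
have hP : 0 < 1 - s by lra.
have hthi : 0 < t * (1 - t) by nra.
split.
  exists hi; rewrite lexx andbT /lo ge_max; apply/andP; split.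
    rewrite ler_pdivrMr; last by nra.
    have -> : hi * (2 * (1 - t)) = 2 * (t ^+ 2 + mk * s) / t.
      by rewrite /hi; field; rewrite !gt_eqF.
    rewrite ler_pdivlMr //.
    have : S * t <= t ^+ 2 + 2 * mk * s.
      have hr : 0 <= t ^+ 2 + 2 * mk * s by nra.
      rewrite -(ler_pXn2r (n := 2)) // ?nnegrE; last by nra.
      rewrite exprMn hS2; nra.
    rewrite -/S; nra.
  rewrite ler_pdivrMr; last by apply: mulr_gt0 => //; nra.
  have -> : hi * ((1 - s) * (1 - t) * t) = (t ^+ 2 + mk * s) * (1 - s).
    by rewrite /hi; field; rewrite !gt_eqF.
  nra.
move=> wk /andP[hlo hhi] p xkm1 xk x; cbv zeta.
move: hlo; rewrite /lo ge_max => /andP[hlo1 hlo2].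
have hy : 0 < (1 - t) * wk.
  move: hlo1; rewrite -/S ler_pdivrMr; last by nra.
  have : 0 < t + S by lra.
  nra.
set y := (1 - t) * wk in hy.
have g1 : 0 <= y ^+ 2 - t * y - ak.
  move: hlo1; rewrite -/S ler_pdivrMr; last by nra.
  have -> : wk * (2 * (1 - t)) = 2 * y by rewrite /y; ring.
  move=> hh.
  have h2y : S <= 2 * y - t by lra.
  have : S ^+ 2 <= (2 * y - t) ^+ 2 by rewrite ler_pXn2r // ?nnegrE; lra.
  rewrite hS2; nra.
have g2 : 0 <= (1 - s) * t * y - ak * s.
  move: hlo2; rewrite ler_pdivrMr; last by apply: mulr_gt0 => //; nra.
  rewrite /y; nra.
have g3 : 0 <= t ^+ 2 + (ak + muf / (Lkm1 + muf)) * s - t * y.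
  move: hhi; rewrite /hi ler_pdivlMr // -emk /y; nra.
have hf := @key_f R ak (muf / (Lkm1 + muf)) s t y hc hs hs1 g1 g2 g3.
rewrite /enorm !sqr_sqrtr; try by apply: sumr_ge0 => i _; exact: sqr_ge0.
rewrite !mulr_sumr -sumrB; apply: ler_sum => i _.
rewrite !mxE.
apply: coord => //.
Qed.
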